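(* Let $\bm M=\bm M^\star+\bm E\in\mathbb R^{n_1\times n_2}$, with SVDs $\bm M^\star=\sum_{i=1}^{n_1}\sigma_i^\star\bm u_i^\star\bm v_i^{\star\top}$ and $\bm M=\sum_{i=1}^{n_1}\sigma_i\bm u_i\bm v_i^\top$, where $\sigma_1^\star\ge\dots\ge\sigma_{n_1}^\star\ge0$ and $\sigma_1\ge\dots\ge\sigma_{n_1}\ge0$ are the singular values, $\bm u_i^\star,\bm u_i$ the corresponding left singular vectors and $\bm v_i^\star,\bm v_i$ the corresponding right singular vectors. Let $\bm U^\star=[\bm u_1^\star,\dots,\bm u_r^\star]$ and $\bm U=[\bm u_1,\dots,\bm u_r]$ be the rank-$r$ leading left singular subspaces of $\bm M^\star$ and $\bm M$. If $\sigma_r^\star-\sigma_{r+1}^\star>2\|\bm E\|$, then $$\big\|(\bm U\bm U^\top-\bm U^\star\bm U^{\star\top})\bm M^\star\big\|\le\frac{4\sigma_r^\star\|\bm E\|}{\sigma_r^\star-\sigma_{r+1}^\star}.$$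
   Context: $\|\cdot\|$ denotes the spectral norm. *)

(* Defs.v *)
From HB Require Import structures.
From mathcomp Require Import all_boot all_order all_algebra.
From mathcomp Require Import classical_sets reals.
Set Implicit Arguments. Unset Strict Implicit. Unset Printing Implicit Defensive.
Import Order.TTheory GRing.Theory Num.Theory.
Local Open Scope ring_scope.
Local Open Scope classical_set_scope.

Definition vnorm {R : realType} {n : nat} (x : 'cV[R]_n) : R :=
  Num.sqrt (\sum_(i < n) x i 0 ^+ 2).

Definition specnorm {R : realType} {m n : nat} (A : 'M[R]_(m, n)) : R :=
  sup [set vnorm (A *m x) | x in [set x : 'cV[R]_n | vnorm x = 1]].

Definition diag_of {R : realType} (n : nat) (s : nat -> R) : 'M[R]_n :=
  diag_mx (\row_(i < n) s (nat_of_ord i)).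

Definition lead_proj {R : realType} {n k : nat} (r : nat) (U : 'M[R]_(n, k)) : 'M[R]_n :=
  \sum_(j < k | (nat_of_ord j < r)%N) (col j U *m (col j U)^T).

Definition is_svd {R : realType} {n1 n2 : nat} (M : 'M[R]_(n1, n2))
  (U : 'M[R]_n1) (s : nat -> R) (V : 'M[R]_(n2, n1)) : Prop :=
  [/\ U^T *m U = 1%:M, V^T *m V = 1%:M,
      (forall i, (i < n1)%N -> 0 <= s i),
      (forall i j, (i <= j)%N -> (j < n1)%N -> s j <= s i)
    & M = U *m diag_of n1 s *m V^T].

(* Main.v *)
Require Import Defs.
From HB Require Import structures.
From mathcomp Require Import all_boot all_order all_algebra.
From mathcomp Require Import classical_sets reals.
Import Order.TTheory GRing.Theory Num.Theory.
Local Open Scope ring_scope.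

From mathcomp Require Import ring lra zify.
Set Implicit Arguments. Unset Strict Implicit. Unset Printing Implicit Defensive.



Definition dot {R : realType} {n : nat} (x y : 'cV[R]_n) : R :=
  \sum_(i < n) x i 0 * y i 0.

Lemma dotE {R : realType} {n : nat} (x y : 'cV[R]_n) : dot x y = (x^T *m y) 0 0.
Proof. by rewrite /dot !mxE; apply: eq_bigr => i _; rewrite mxE. Qed.

Lemma dotC {R : realType} {n : nat} (x y : 'cV[R]_n) : dot x y = dot y x.
Proof. by apply: eq_bigr => i _; rewrite mulrC. Qed.

Lemma dotDl {R : realType} {n : nat} (x y z : 'cV[R]_n) : dot (x + y) z = dot x z + dot y z.
Proof. by rewrite /dot -big_split; apply: eq_bigr => i _; rewrite mxE mulrDl. Qed.

Lemma dotZl {R : realType} {n : nat} a (x z : 'cV[R]_n) : dot (a *: x) z = a * dot x z.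
Proof. by rewrite /dot mulr_sumr; apply: eq_bigr => i _; rewrite mxE mulrA. Qed.

Lemma dotNl {R : realType} {n : nat} (x z : 'cV[R]_n) : dot (- x) z = - dot x z.
Proof. by rewrite /dot -sumrN; apply: eq_bigr => i _; rewrite mxE mulNr. Qed.

Lemma dotBl {R : realType} {n : nat} (x y z : 'cV[R]_n) : dot (x - y) z = dot x z - dot y z.
Proof. by rewrite dotDl dotNl. Qed.

Lemma dotDr {R : realType} {n : nat} (x y z : 'cV[R]_n) : dot z (x + y) = dot z x + dot z y.
Proof. by rewrite !(dotC z) dotDl. Qed.
Lemma dotZr {R : realType} {n : nat} a (x z : 'cV[R]_n) : dot z (a *: x) = a * dot z x.
Proof. by rewrite !(dotC z) dotZl. Qed.
Lemma dotBr {R : realType} {n : nat} (x y z : 'cV[R]_n) : dot z (x - y) = dot z x - dot z y.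
Proof. by rewrite !(dotC z) dotBl. Qed.

Lemma dot_mul {R : realType} {m n : nat} (A : 'M[R]_(m, n)) x y :
  dot (A *m x) y = dot x (A^T *m y).
Proof. by rewrite !dotE trmx_mul mulmxA. Qed.

Lemma dot_ge0 {R : realType} {n : nat} (x : 'cV[R]_n) : 0 <= dot x x.
Proof. by apply: sumr_ge0 => i _; rewrite -expr2 sqr_ge0. Qed.

Lemma dot_eq0 {R : realType} {n : nat} (x : 'cV[R]_n) : dot x x = 0 -> x = 0.
Proof.
move=> /eqP; rewrite psumr_eq0; last by move=> i _; rewrite -expr2 sqr_ge0.
move=> /allP H; apply/matrixP => i j; rewrite (ord1 j) mxE.
by have /(_ (mem_index_enum i)) := H i; rewrite implyTb mulf_eq0 orbb => /eqP.
Qed.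

Lemma vnorm_sq {R : realType} {n : nat} (x : 'cV[R]_n) : vnorm x ^+ 2 = dot x x.
Proof.
rewrite /vnorm /dot sqr_sqrtr //; last by apply: sumr_ge0 => i _; rewrite sqr_ge0.
Qed.

Lemma vnormE {R : realType} {n : nat} (x : 'cV[R]_n) : vnorm x = Num.sqrt (dot x x).
Proof. by rewrite /vnorm /dot; congr Num.sqrt; apply: eq_bigr => i _; rewrite expr2. Qed.

Lemma vnorm_ge0 {R : realType} {n : nat} (x : 'cV[R]_n) : 0 <= vnorm x.
Proof. by rewrite /vnorm sqrtr_ge0. Qed.

Lemma CS {R : realType} {n : nat} (x y : 'cV[R]_n) :
  dot x y ^+ 2 <= dot x x * dot y y.
Proof.
have [y0|ny0] := eqVneq (dot y y) 0.
  have z v : dot v (0:'cV[R]_n) = 0 by rewrite /dot big1 // => i _; rewrite mxE mulr0.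
  by rewrite (dot_eq0 y0) z expr0n /= mulr_ge0 ?dot_ge0.
have ypos : 0 < dot y y by rewrite lt_def ny0 dot_ge0.
have H := dot_ge0 (dot y y *: x - dot x y *: y).
rewrite !dotBl !dotBr !dotZl !dotZr (dotC y x) in H.
have : 0 <= dot y y * (dot x x * dot y y - dot x y ^+ 2) by nra.
by rewrite pmulr_rge0 // subr_ge0.
Qed.

Lemma CSn {R : realType} {n : nat} (x y : 'cV[R]_n) :
  dot x y <= vnorm x * vnorm y.
Proof.
have h0 : 0 <= vnorm x * vnorm y by rewrite mulr_ge0 ?vnorm_ge0.
have [/ltW/le_trans->//|hp] := ltP (dot x y) 0.
rewrite -(ler_pXn2r (n := 2)) ?nnegrE // exprMn !vnorm_sq; exact: CS.
Qed.

Lemma vnormD {R : realType} {n : nat} (x y : 'cV[R]_n) :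
  vnorm (x + y) <= vnorm x + vnorm y.
Proof.
rewrite -(ler_pXn2r (n := 2)) ?nnegrE ?addr_ge0 ?vnorm_ge0 //.
rewrite vnorm_sq dotDl !dotDr sqrrD !vnorm_sq (dotC y x).
have := CSn x y; lra.
Qed.

Lemma vnormN {R : realType} {n : nat} (x : 'cV[R]_n) : vnorm (- x) = vnorm x.
Proof. by rewrite !vnormE dotNl dotC dotNl opprK. Qed.

Lemma vnormB {R : realType} {n : nat} (x y : 'cV[R]_n) :
  vnorm (x - y) <= vnorm x + vnorm y.
Proof. by rewrite -(vnormN y) vnormD. Qed.

Lemma vnormZ {R : realType} {n : nat} a (x : 'cV[R]_n) : vnorm (a *: x) = `|a| * vnorm x.
Proof.
by rewrite !vnormE dotZl dotZr mulrA -expr2 sqrtrM ?sqr_ge0 // sqrtr_sqr.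
Qed.

Lemma vnorm_le {R : realType} {m n : nat} (x : 'cV[R]_m) (y : 'cV[R]_n) c :
  0 <= c -> dot x x <= c ^+ 2 * dot y y -> vnorm x <= c * vnorm y.
Proof.
move=> c0 H; rewrite -(ler_pXn2r (n := 2)) ?nnegrE ?mulr_ge0 ?vnorm_ge0 //.
by rewrite exprMn !vnorm_sq.
Qed.



Lemma vnorm0 {R : realType} {n : nat} : vnorm (0 : 'cV[R]_n) = 0.
Proof. by rewrite /vnorm big1 ?sqrtr0 // => i _; rewrite mxE expr0n. Qed.

Lemma vnorm_eq0 {R : realType} {n : nat} (x : 'cV[R]_n) : vnorm x = 0 -> x = 0.
Proof. by move=> h; apply: dot_eq0; rewrite -vnorm_sq h expr0n. Qed.

Lemma vnorm_unit {R : realType} {n : nat} (x : 'cV[R]_n) : x != 0 ->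
  vnorm ((vnorm x)^-1 *: x) = 1.
Proof.
move=> nx; have h : vnorm x != 0 by apply/eqP => /vnorm_eq0; apply/eqP.
rewrite vnormZ ger0_norm ?invr_ge0 ?vnorm_ge0 // mulVf //.
Qed.

Lemma exists_unit {R : realType} {n : nat} : (0 < n)%N -> exists x : 'cV[R]_n, vnorm x = 1.
Proof.
move=> n0; exists ((vnorm (const_mx 1 : 'cV[R]_n))^-1 *: const_mx 1).
apply: vnorm_unit; apply/eqP => /matrixP /(_ (Ordinal n0) 0).
by rewrite !mxE; apply/eqP; rewrite oner_eq0.
Qed.

Lemma coord_le {R : realType} {n : nat} (x : 'cV[R]_n) j : x j 0 ^+ 2 <= dot x x.
Proof.
rewrite /dot (bigD1 j) //= -expr2 lerDl.
by apply: sumr_ge0 => i _; rewrite -expr2 sqr_ge0.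
Qed.

Lemma mulmx_sumcol {R : realType} {m n : nat} (A : 'M[R]_(m, n)) x :
  A *m x = \sum_(j < n) x j 0 *: col j A.
Proof.
apply/matrixP => i k; rewrite (ord1 k) !mxE summxE; apply: eq_bigr => j _.
by rewrite !mxE mulrC.
Qed.

Lemma vnorm_sum {R : realType} {n m : nat} (f : 'I_m -> 'cV[R]_n) :
  vnorm (\sum_(j < m) f j) <= \sum_(j < m) vnorm (f j).
Proof.
apply: (big_ind2 (fun a b => vnorm a <= b)); first by rewrite vnorm0.
  by move=> a b c d h1 h2; apply: le_trans (vnormD _ _) _; apply: lerD.
by [].
Qed.

Lemma specnorm_bounded {R : realType} {m n : nat} (A : 'M[R]_(m, n)) :
  has_ubound [set vnorm (A *m x) | x in [set x : 'cV[R]_n | vnorm x = 1]].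
Proof.
exists (\sum_(j < n) vnorm (col j A)) => _ [x /= hx <-].
rewrite mulmx_sumcol; apply: le_trans (vnorm_sum _) _.
apply: ler_sum => j _; rewrite vnormZ ler_piMl ?vnorm_ge0 //.
have := coord_le x j; rewrite -vnorm_sq hx expr1n => h.
by rewrite -(ler_pXn2r (n := 2)) ?nnegrE ?normr_ge0 // real_normK ?num_real // expr1n.
Qed.

Lemma specnorm_ub {R : realType} {m n : nat} (A : 'M[R]_(m, n)) x :
  vnorm (A *m x) <= specnorm A * vnorm x.
Proof.
have [->|nx] := eqVneq x 0; first by rewrite mulmx0 !vnorm0 mulr0.
have h : vnorm x != 0 by apply/eqP => /vnorm_eq0; apply/eqP.
have hp : 0 < vnorm x by rewrite lt_def h vnorm_ge0.
have -> : A *m x = vnorm x *: (A *m ((vnorm x)^-1 *: x)).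
  by rewrite -scalemxAr scalerA divff // scale1r.
rewrite vnormZ ger0_norm ?vnorm_ge0 // mulrC ler_pM2r //.
apply: (ub_le_sup (specnorm_bounded A)).
by exists ((vnorm x)^-1 *: x) => //=; rewrite vnorm_unit.
Qed.

Lemma specnorm_le {R : realType} {m n : nat} (A : 'M[R]_(m, n)) c :
  (0 < n)%N -> (forall x, vnorm (A *m x) <= c * vnorm x) -> specnorm A <= c.
Proof.
move=> n0 H; have [u hu] := exists_unit (R := R) n0.
apply: ge_sup; first by exists (vnorm (A *m u)), u.
by move=> _ [x /= hx <-]; have := H x; rewrite hx mulr1.
Qed.

Lemma specnorm_ge0 {R : realType} {m n : nat} (A : 'M[R]_(m, n)) :
  (0 < n)%N -> 0 <= specnorm A.
Proof.
move=> n0; have [u hu] := exists_unit (R := R) n0.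
by have := specnorm_ub A u; rewrite hu mulr1; apply: le_trans; apply: vnorm_ge0.
Qed.

Lemma specnorm_tr {R : realType} {m n : nat} (A : 'M[R]_(m, n)) y :
  (0 < n)%N -> vnorm (A^T *m y) <= specnorm A * vnorm y.
Proof.
move=> n0.
have [h0|hp] := eqVneq (vnorm (A^T *m y)) 0.
  by rewrite h0 mulr_ge0 ?vnorm_ge0 ?specnorm_ge0.
have [->|ny] := eqVneq y 0; first by rewrite mulmx0 !vnorm0 mulr0.
have hy : 0 < vnorm y by rewrite lt_def vnorm_ge0 andbT; apply/eqP => /vnorm_eq0; apply/eqP.
have hp' : 0 < vnorm (A^T *m y) by rewrite lt_def hp vnorm_ge0.
rewrite -(ler_pM2l hp') -expr2 vnorm_sq dot_mul trmxK.
apply: le_trans (CSn _ _) _; rewrite mulrC mulrA ler_pM2r //.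
by rewrite mulrC; apply: specnorm_ub.
Qed.



Definition ind {R : realType} (r : nat) : nat -> R := fun i => if (i < r)%N then 1 else 0.
Definition cind {R : realType} (r : nat) : nat -> R := fun i => if (i < r)%N then 0 else 1.

Lemma diag_ofM {R : realType} n (f g : nat -> R) :
  diag_of n f *m diag_of n g = diag_of n (fun i => f i * g i).
Proof. by rewrite /diag_of mulmx_diag; congr diag_mx; apply/rowP => i; rewrite !mxE. Qed.

Lemma diag_ofT {R : realType} n (f : nat -> R) : (diag_of n f)^T = diag_of n f.
Proof. exact: tr_diag_mx. Qed.

Lemma diag_of_ext {R : realType} n (f g : nat -> R) :
  (forall i, (i < n)%N -> f i = g i) -> diag_of n f = diag_of n g.
Proof. by move=> H; congr diag_mx; apply/rowP => i; rewrite !mxE H. Qed.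

Lemma diag_of1 {R : realType} n : diag_of n (fun _ => 1) = 1%:M :> 'M[R]_n.
Proof. by rewrite -diag_const_mx; congr diag_mx; apply/rowP => i; rewrite !mxE. Qed.

Lemma diag_ofD {R : realType} n (f g : nat -> R) :
  diag_of n f + diag_of n g = diag_of n (fun i => f i + g i).
Proof. by apply/matrixP => i j; rewrite !mxE -mulrnDl. Qed.

Lemma diag_ofC {R : realType} n (a : R) (w : 'cV[R]_n) : diag_of n (fun _ => a) *m w = a *: w.
Proof. by apply/matrixP => i j; rewrite mul_diag_mx !mxE. Qed.

Lemma pid_diag {R : realType} n r : pid_mx r = diag_of n (ind r) :> 'M[R]_n.
Proof.
apply/matrixP => i j; rewrite !mxE /ind.
by case: ifP => _; rewrite ?andbT ?andbF ?mul0rn.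
Qed.

Lemma ind_cind {R : realType} r : (fun i => @ind R r i + cind r i) = fun _ => 1.
Proof. by apply: boolp.funext => i; rewrite /ind /cind; case: ifP; rewrite ?addr0 ?add0r. Qed.

Lemma lead_projE {R : realType} n k r (U : 'M[R]_(n, k)) :
  lead_proj r U = U *m diag_of k (ind r) *m U^T.
Proof.
apply/matrixP => a b; rewrite /lead_proj summxE !mxE big_mkcond /=.
apply: eq_bigr => j _; rewrite /diag_of mul_mx_diag !mxE big_ord1 !mxE /ind.
by case: ifP => _; rewrite ?mulr1 ?mulr0 ?mul0r.
Qed.

Lemma vnorm_diag {R : realType} n (f g : nat -> R) K (w : 'cV[R]_n) : 0 <= K ->
  (forall i : 'I_n, f i ^+ 2 * w i 0 ^+ 2 <= K ^+ 2 * (g i ^+ 2 * w i 0 ^+ 2)) ->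
  vnorm (diag_of n f *m w) <= K * vnorm (diag_of n g *m w).
Proof.
move=> K0 H; apply: vnorm_le => //; rewrite /dot mulr_sumr; apply: ler_sum => i _.
by rewrite !mul_diag_mx !mxE -!expr2 !exprMn.
Qed.

Lemma vnorm_orth {R : realType} p k (U : 'M[R]_(p, k)) w :
  U^T *m U = 1%:M -> vnorm (U *m w) = vnorm w.
Proof. by move=> H; rewrite !vnormE dot_mul mulmxA H mul1mx. Qed.

Lemma vnorm_orthT {R : realType} p k (U : 'M[R]_(p, k)) y :
  U^T *m U = 1%:M -> vnorm (U^T *m y) <= vnorm y.
Proof.
move=> H; have [h0|hp] := eqVneq (vnorm (U^T *m y)) 0; first by rewrite h0 vnorm_ge0.
have hp' : 0 < vnorm (U^T *m y) by rewrite lt_def hp vnorm_ge0.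
rewrite -(ler_pM2l hp') -expr2 vnorm_sq dot_mul trmxK.
apply: le_trans (CSn _ _) _; rewrite mulrC (vnorm_orth _ H) //.
Qed.

Lemma ker_exists {R : realType} n k (C : 'M[R]_n) : (k < n)%N -> (\rank C <= k)%N ->
  exists c : 'cV[R]_n, [/\ c != 0, pid_mx k.+1 *m c = c & C *m c = 0].
Proof.
move=> kn rC.
set C' := C *m (pid_mx k.+1 : 'M[R]_n).
set N := kermx C'^T.
have rN : (n - k <= \rank N)%N.
  rewrite mxrank_ker mxrank_tr; apply: leq_sub2l.
  by apply: leq_trans (mxrankM_maxl _ _) rC.
have : N *m (pid_mx k.+1 : 'M[R]_n) != 0.
  apply/negP => /eqP /sub_kermxP /mxrankS; rewrite mxrank_ker rank_pid_mx //.
  move=> h; have := leq_trans rN h; rewrite leq_sub2lE ?ltnn //; exact: ltnW.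
case/eqP/row_matrixP/boolp.existsNP => i; rewrite row0 row_mul => hi.
set u := row i N.
exists ((u *m pid_mx k.+1)^T); split.
- by apply/eqP => /(congr1 trmx); rewrite trmxK trmx0; apply/eqP/eqP.
- by rewrite trmx_mul tr_pid_mx mulmxA mul_pid_mx !minnn pid_mx_minv.
- rewrite trmx_mul tr_pid_mx mulmxA -/C'.
  have : (u <= N)%MS by apply: row_sub.
  by move/sub_kermxP => /(congr1 trmx); rewrite trmx_mul trmxK trmx0.
Qed.



Definition proj {R : realType} {p n : nat} r (U : 'M[R]_(p, n)) : 'M[R]_p :=
  U *m diag_of n (ind r) *m U^T.
Definition cproj {R : realType} {p n : nat} r (U : 'M[R]_(p, n)) : 'M[R]_p :=
  U *m diag_of n (cind r) *m U^T.

Lemma mulmxKtr {R : realType} {p n q : nat} (U : 'M[R]_(p, n)) (X : 'M[R]_(q, n)) :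
  U^T *m U = 1%:M -> X *m U^T *m U = X.
Proof. by move=> H; rewrite -mulmxA H mulmx1. Qed.

Lemma diag_comm {R : realType} {p q n : nat} (X : 'M[R]_(p, n)) (Y : 'M[R]_(n, q)) f g :
  X *m diag_of n f *m diag_of n g *m Y = X *m diag_of n g *m diag_of n f *m Y.
Proof.
rewrite -!(mulmxA X) !diag_ofM.
by rewrite (@diag_of_ext _ _ (fun i => f i * g i) (fun i => g i * f i)) // => i _; rewrite mulrC.
Qed.

Lemma projT {R : realType} {p n : nat} r (U : 'M[R]_(p, n)) : (proj r U)^T = proj r U.
Proof. by rewrite /proj !trmx_mul trmxK diag_ofT mulmxA. Qed.
Lemma cprojT {R : realType} {p n : nat} r (U : 'M[R]_(p, n)) : (cproj r U)^T = cproj r U.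
Proof. by rewrite /cproj !trmx_mul trmxK diag_ofT mulmxA. Qed.

Lemma projK {R : realType} {p n : nat} r (U : 'M[R]_(p, n)) :
  U^T *m U = 1%:M -> proj r U *m proj r U = proj r U.
Proof.
move=> H; rewrite /proj !mulmxA (mulmxKtr _ H) -(mulmxA U) diag_ofM.
by rewrite (@diag_of_ext _ _ (fun i => ind r i * ind r i) (ind r)) // => i _; rewrite /ind; case: ifP; rewrite ?mulr1 ?mulr0.
Qed.

Lemma proj_cproj {R : realType} {n : nat} r (U : 'M[R]_n) :
  U^T *m U = 1%:M -> proj r U + cproj r U = 1%:M.
Proof.
move=> H; rewrite /proj /cproj -mulmxDl -mulmxDr diag_ofD ind_cind diag_of1 mulmx1.
exact: mulmx1C.
Qed.

Lemma vnorm_proj {R : realType} {p n : nat} r (U : 'M[R]_(p, n)) y :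
  U^T *m U = 1%:M -> vnorm (proj r U *m y) <= vnorm y.
Proof.
move=> H; rewrite /proj -!mulmxA vnorm_orth //.
apply: le_trans (vnorm_orthT _ H); rewrite -{2}(mul1mx (U^T *m y)) -diag_of1 -[X in _ <= X]mul1r.
apply: vnorm_diag => // i; rewrite expr1n mul1r ler_wpM2r ?sqr_ge0 //.
by rewrite /ind; case: ifP; rewrite ?expr1n ?expr0n.
Qed.

Lemma vnorm_cproj {R : realType} {p n : nat} r (U : 'M[R]_(p, n)) y :
  U^T *m U = 1%:M -> vnorm (cproj r U *m y) <= vnorm y.
Proof.
move=> H; rewrite /cproj -!mulmxA vnorm_orth //.
apply: le_trans (vnorm_orthT _ H); rewrite -{2}(mul1mx (U^T *m y)) -diag_of1 -[X in _ <= X]mul1r.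
apply: vnorm_diag => // i; rewrite expr1n mul1r ler_wpM2r ?sqr_ge0 //.
by rewrite /cind; case: ifP; rewrite ?expr1n ?expr0n.
Qed.

Section Svd.
End Svd.

Lemma svd_Pcomm {R : realType} {n m : nat} (A : 'M[R]_(n, m)) U s V r :
  is_svd A U s V -> A *m proj r V = proj r U *m A.
Proof.
case=> hU hV _ _ ->; rewrite /proj !mulmxA (mulmxKtr _ hV) (mulmxKtr _ hU).
exact: diag_comm.
Qed.

Lemma svd_Qcomm {R : realType} {n m : nat} (A : 'M[R]_(n, m)) U s V r :
  is_svd A U s V -> A *m cproj r V = cproj r U *m A.
Proof.
case=> hU hV _ _ ->; rewrite /cproj !mulmxA (mulmxKtr _ hV) (mulmxKtr _ hU).
exact: diag_comm.
Qed.

Lemma svd_QcommT {R : realType} {n m : nat} (A : 'M[R]_(n, m)) U s V r :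
  is_svd A U s V -> A^T *m cproj r U = cproj r V *m A^T.
Proof.
move=> /(svd_Qcomm r) /(congr1 trmx) /=; rewrite !trmx_mul !trmxK diag_ofT /cproj !mulmxA => ->.
by [].
Qed.

Lemma svd_tail {R : realType} {n m : nat} (A : 'M[R]_(n, m)) U s V r z :
  is_svd A U s V -> (r < n)%N ->
  vnorm (A *m (cproj r V *m z)) <= s r * vnorm (cproj r V *m z).
Proof.
case=> hU hV s0 smono -> rn; rewrite /cproj !mulmxA (mulmxKtr _ hV).
rewrite -!mulmxA (vnorm_orth _ hU) (vnorm_orth _ hV) mulmxA diag_ofM.
apply: vnorm_diag; first by apply: s0.
move=> i; rewrite /cind; case: ifP => hi; rewrite ?mulr0 ?expr0n ?mul0r ?mulr0 //.
rewrite mulr1 expr1n mul1r ler_wpM2r ?sqr_ge0 // ler_sqr ?nnegrE ?s0 //.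
by apply: smono => //; rewrite leqNgt hi.
Qed.

Lemma svd_tailT {R : realType} {n m : nat} (A : 'M[R]_(n, m)) U s V r w :
  is_svd A U s V -> (r < n)%N ->
  vnorm (A^T *m (cproj r U *m w)) <= s r * vnorm (cproj r U *m w).
Proof.
case=> hU hV s0 smono -> rn; rewrite /cproj !trmx_mul !trmxK diag_ofT !mulmxA (mulmxKtr _ hU).
rewrite -!mulmxA (vnorm_orth _ hU) (vnorm_orth _ hV) mulmxA diag_ofM.
apply: vnorm_diag; first by apply: s0.
move=> i; rewrite /cind; case: ifP => hi; rewrite ?mulr0 ?expr0n ?mul0r ?mulr0 //.
rewrite mulr1 expr1n mul1r ler_wpM2r ?sqr_ge0 // ler_sqr ?nnegrE ?s0 //.
by apply: smono => //; rewrite leqNgt hi.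
Qed.

Definition spinv {R : realType} n r (s : nat -> R) : 'M[R]_n :=
  diag_of n (fun i => if (i < r)%N then (s i)^-1 else 0).

Lemma spinv_facts {R : realType} {n m : nat} (A : 'M[R]_(n, m)) U s V r :
  is_svd A U s V -> (0 < r)%N -> (r <= n)%N -> 0 < s r.-1 ->
  [/\ diag_of n s *m spinv n r s = diag_of n (ind r),
      diag_of n (ind r) *m spinv n r s = spinv n r s &
      forall w : 'cV[R]_n, vnorm (spinv n r s *m w) <= (s r.-1)^-1 * vnorm w].
Proof.
case=> hU hV s0 smono _ r0 rn sp.
have spos i : (i < r)%N -> 0 < s i.
  move=> ir; apply: lt_le_trans sp _; apply: smono; first by rewrite -ltnS prednK.
  by rewrite prednK.
split.
- rewrite /spinv diag_ofM; apply: diag_of_ext => i _; rewrite /ind.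
  by case: ifP => // ir; rewrite ?mul1r ?mul0r ?mulr0 // divff // gt_eqF // spos.
- rewrite /spinv diag_ofM; apply: diag_of_ext => i _; rewrite /ind.
  by case: ifP => // ir; rewrite ?mul1r ?mul0r.
- move=> w; rewrite -{2}(mul1mx w) -diag_of1; apply: vnorm_diag.
    by rewrite invr_ge0 ltW.
  move=> i; rewrite expr1n mul1r ler_wpM2r ?sqr_ge0 //.
  case: ifP => ir; first last.
    by rewrite expr0n /= sqr_ge0.
  have hi := spos i ir.
  rewrite ler_sqr ?nnegrE ?invr_ge0 ?(ltW hi) ?(ltW sp) // lef_pV2 ?posrE //.
  apply: smono; lia.
Qed.

Lemma svd_pinv {R : realType} {n m : nat} (A : 'M[R]_(n, m)) U s V r :
  is_svd A U s V -> (0 < r)%N -> (r <= n)%N -> 0 < s r.-1 -> forall y,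
  exists z, [/\ A *m z = proj r U *m y, proj r V *m z = z &
                vnorm z <= (s r.-1)^-1 * vnorm y].
Proof.
move=> hA r0 rn sp y; have [h1 h2 h3] := spinv_facts hA r0 rn sp.
case: hA => hU hV _ _ ->.
exists (V *m spinv n r s *m U^T *m y); split.
- by rewrite /proj !mulmxA (mulmxKtr _ hV) -(mulmxA U) h1.
- by rewrite /proj !mulmxA (mulmxKtr _ hV) -(mulmxA V) h2.
- rewrite -!mulmxA (vnorm_orth _ hV); apply: le_trans (h3 _) _.
  by rewrite ler_wpM2l ?invr_ge0 ?(ltW sp) // (vnorm_orthT _ hU).
Qed.

Lemma svd_pinvT {R : realType} {n m : nat} (A : 'M[R]_(n, m)) U s V r :
  is_svd A U s V -> (0 < r)%N -> (r <= n)%N -> 0 < s r.-1 -> forall z,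
  exists w, [/\ A^T *m w = proj r V *m z, proj r U *m w = w &
                vnorm w <= (s r.-1)^-1 * vnorm z].
Proof.
move=> hA r0 rn sp z; have [h1 h2 h3] := spinv_facts hA r0 rn sp.
case: hA => hU hV _ _ ->.
exists (U *m spinv n r s *m V^T *m z); split.
- by rewrite /proj !trmx_mul !trmxK diag_ofT !mulmxA (mulmxKtr _ hU) -(mulmxA V (diag_of n s)) h1.
- by rewrite /proj !mulmxA (mulmxKtr _ hU) -(mulmxA U) h2.
- rewrite -!mulmxA (vnorm_orth _ hU); apply: le_trans (h3 _) _.
  by rewrite ler_wpM2l ?invr_ge0 ?(ltW sp) // (vnorm_orthT _ hV).
Qed.



Lemma diag_entry {R : realType} n (f : nat -> R) (c : 'cV[R]_n) i :
  (diag_of n f *m c) i 0 = f i * c i 0.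
Proof. by rewrite mul_diag_mx !mxE. Qed.

Lemma weyl {R : realType} {n m : nat} (A B : 'M[R]_(n, m)) UA sA VA UB sB VB e k :
  is_svd A UA sA VA -> is_svd B UB sB VB ->
  (forall x, vnorm ((A - B) *m x) <= e * vnorm x) -> (k < n)%N ->
  sA k <= sB k + e.
Proof.
move=> hA hB hE kn.
have [c [c0 hpc hC]] : exists c : 'cV[R]_n,
    [/\ c != 0, pid_mx k.+1 *m c = c & diag_of n (ind k) *m VB^T *m VA *m c = 0].
  apply: ker_exists => //.
  apply: leq_trans (mxrankM_maxl _ _) _; apply: leq_trans (mxrankM_maxl _ _) _.
  by rewrite -pid_diag rank_pid_mx // ltnW.
have cpos : 0 < vnorm c.
  by rewrite lt_def vnorm_ge0 andbT; apply/eqP => /vnorm_eq0; apply/eqP.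
have ci (i : 'I_n) : (k < i)%N -> c i 0 = 0.
  move=> ki; move/matrixP: hpc => /(_ i 0); rewrite /= pid_diag diag_entry /ind.
  by rewrite ltnNge ki /= mul0r => <-.
case: (hA) => hUA hVA sA0 sAm eA; case: (hB) => hUB hVB sB0 sBm eB.
set x := VA *m c.
have nx : vnorm x = vnorm c by rewrite vnorm_orth.
have hAx : sA k * vnorm c <= vnorm (A *m x).
  rewrite eA /x !mulmxA (mulmxKtr _ hVA) -!mulmxA (vnorm_orth _ hUA).
  rewrite -(ger0_norm (sA0 _ kn)) -vnormZ -diag_ofC -[X in _ <= X]mul1r.
  apply: vnorm_diag => // i; rewrite expr1n mul1r.
  case: (leqP i k) => ik; last by rewrite ci // expr0n /= !mulr0.
  rewrite ler_wpM2r ?sqr_ge0 // ler_sqr ?nnegrE ?sA0 //; first exact: sAm.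
set y := VB^T *m x.
have yi (i : 'I_n) : (i < k)%N -> y i 0 = 0.
  move=> ik; move/matrixP: hC => /(_ i 0).
  by rewrite -!mulmxA diag_entry /ind ik mul1r /y /x => ->; rewrite mxE.
have hBx : vnorm (B *m x) <= sB k * vnorm c.
  rewrite eB -!mulmxA (vnorm_orth _ hUB) -/y.
  apply: le_trans (_ : sB k * vnorm (diag_of n (fun _ => 1) *m y) <= _).
    apply: vnorm_diag; first exact: sB0.
    move=> i; rewrite expr1n mul1r.
    case: (ltnP i k) => ik; first by rewrite yi // expr0n /= !mulr0.
    rewrite ler_wpM2r ?sqr_ge0 // ler_sqr ?nnegrE ?sB0 //; first exact: sBm.
  rewrite diag_of1 mul1mx ler_wpM2l ?sB0 // -nx /y.
  exact: vnorm_orthT.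
have hD : vnorm (A *m x) <= vnorm (B *m x) + e * vnorm c.
  have -> : A *m x = B *m x + (A - B) *m x by rewrite mulmxBl addrC subrK.
  by apply: le_trans (vnormD _ _) _; rewrite lerD2l -nx.
have : sA k * vnorm c <= (sB k + e) * vnorm c by rewrite mulrDl; lra.
by rewrite ler_pM2r.
Qed.

Lemma sintheta {R : realType} {n m : nat} (A B F : 'M[R]_(n, m)) UA sA VA UB sB VB e r :
  is_svd A UA sA VA -> is_svd B UB sB VB -> A = B - F ->
  (forall x, vnorm (F *m x) <= e * vnorm x) ->
  (forall y, vnorm (F^T *m y) <= e * vnorm y) ->
  (0 < r)%N -> (r < n)%N -> (0 < m)%N -> 0 <= e -> sB r < sA r.-1 ->
  (forall y, vnorm (cproj r UB *m (proj r UA *m y)) <= e / (sA r.-1 - sB r) * vnorm y) /\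
  (forall z, vnorm (cproj r VB *m (proj r VA *m z)) <= e / (sA r.-1 - sB r) * vnorm z).
Proof.
move=> hA hB hAB hF hFT r0 rn m0 e0 gap.
have n0 : (0 < n)%N by apply: leq_ltn_trans rn.
case: (hB) => hUB hVB sB0 _ _.
have b0 : 0 <= sB r := sB0 _ rn.
set a := sA r.-1; set b := sB r.
have apos : 0 < a by apply: le_lt_trans gap.
set m1 := specnorm (cproj r UB *m proj r UA).
set m2 := specnorm (cproj r VB *m proj r VA).
have m10 : 0 <= m1 by apply: specnorm_ge0.
have m20 : 0 <= m2 by apply: specnorm_ge0.
have c1 : m1 <= (b * m2 + e) / a.
  apply: specnorm_le => // y.
  have [z [hz1 hz2 hz3]] := svd_pinv hA r0 (ltnW rn) apos y.
  rewrite -mulmxA -hz1 hAB mulmxBl mulmxBr mulmxA -(svd_Qcomm r hB) -mulmxA.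
  apply: le_trans (vnormB _ _) _.
  have t1 : vnorm (B *m (cproj r VB *m z)) <= b * m2 * vnorm z.
    apply: le_trans (svd_tail _ hB rn) _; rewrite -mulrA ler_wpM2l //.
    by rewrite -{1}hz2 mulmxA; apply: specnorm_ub.
  have t2 : vnorm (cproj r UB *m (F *m z)) <= e * vnorm z.
    by apply: le_trans (vnorm_cproj _ _ hUB) _.
  apply: le_trans (lerD t1 t2) _; rewrite -mulrDl -mulrA ler_wpM2l //.
  by rewrite addr_ge0 // mulr_ge0.
have c2 : m2 <= (b * m1 + e) / a.
  apply: specnorm_le => // z.
  have [w [hw1 hw2 hw3]] := svd_pinvT hA r0 (ltnW rn) apos z.
  rewrite -mulmxA -hw1 hAB linearB /= mulmxBl mulmxBr mulmxA -(svd_QcommT r hB) -mulmxA.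
  apply: le_trans (vnormB _ _) _.
  have t1 : vnorm (B^T *m (cproj r UB *m w)) <= b * m1 * vnorm w.
    apply: le_trans (svd_tailT _ hB rn) _; rewrite -mulrA ler_wpM2l //.
    by rewrite -{1}hw2 mulmxA; apply: specnorm_ub.
  have t2 : vnorm (cproj r VB *m (F^T *m w)) <= e * vnorm w.
    by apply: le_trans (vnorm_cproj _ _ hVB) _.
  apply: le_trans (lerD t1 t2) _; rewrite -mulrDl -mulrA ler_wpM2l //.
  by rewrite addr_ge0 // mulr_ge0.
have gp : 0 < a - b by rewrite subr_gt0.
have key : m1 <= e / (a - b) /\ m2 <= e / (a - b).
  rewrite !ler_pdivlMr //.
  rewrite ler_pdivlMr // in c1; rewrite ler_pdivlMr // in c2.
  have [h|h] := leP m1 m2.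
    have := ler_wpM2l b0 h; have := ler_wpM2r (ltW gp) h; rewrite -/b; split; lra.
  have := ler_wpM2l b0 (ltW h); have := ler_wpM2r (ltW gp) (ltW h); rewrite -/b; split; lra.
case: key => k1 k2; split.
- move=> y; apply: le_trans (_ : m1 * vnorm y <= _).
    by rewrite mulmxA; apply: specnorm_ub.
  by rewrite ler_wpM2r ?vnorm_ge0.
- move=> z; apply: le_trans (_ : m2 * vnorm z <= _).
    by rewrite mulmxA; apply: specnorm_ub.
  by rewrite ler_wpM2r ?vnorm_ge0.
Qed.



Lemma cprojK {R : realType} {p n : nat} r (U : 'M[R]_(p, n)) :
  U^T *m U = 1%:M -> cproj r U *m cproj r U = cproj r U.
Proof.
move=> H; rewrite /cproj !mulmxA (mulmxKtr _ H) -(mulmxA U) diag_ofM.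
by rewrite (@diag_of_ext _ _ (fun i => cind r i * cind r i) (cind r)) // => i _; rewrite /cind; case: ifP; rewrite ?mulr1 ?mulr0.
Qed.

Lemma dual_bound {R : realType} {n : nat} (P Q : 'M[R]_n) t u :
  P^T = P -> P *m P = P -> Q^T = Q ->
  (forall y, vnorm (Q *m (P *m y)) <= t * vnorm y) ->
  vnorm (P *m (Q *m u)) <= t * vnorm u.
Proof.
move=> PT PP QT H; set v := P *m (Q *m u).
have Pv : P *m v = v by rewrite /v mulmxA PP.
have [h0|hp] := eqVneq (vnorm v) 0.
  by rewrite h0; exact: le_trans (vnorm_ge0 _) (H u).
have hp' : 0 < vnorm v by rewrite lt_def hp vnorm_ge0.
rewrite -(ler_pM2l hp') -expr2 vnorm_sq.
have -> : dot v v = dot u (Q *m (P *m v)).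
  rewrite Pv; have -> : dot v v = dot (P *m (Q *m u)) v by [].
  by rewrite dot_mul PT Pv dot_mul QT.
apply: le_trans (CSn _ _) _; apply: le_trans (ler_wpM2l (vnorm_ge0 u) (H v)) _.
set a := vnorm u; set b := vnorm v; have -> : a * (t * b) = b * (t * a) by ring.
by [].
Qed.

Lemma ratio_bound {R : realType} (e g d : R) :
  0 <= e -> 2 * e < g -> g - e <= d -> e / d <= 2 * e / g.
Proof.
move=> e0 eg gd.
have g0 : 0 < g by lra.
have d0 : 0 < d by lra.
rewrite ler_pdivrMr // mulrAC ler_pdivlMr //.
have := mulr_ge0 e0 (_ : 0 <= g - 2 * e); have := mulr_ge0 e0 (_ : 0 <= d - (g - e)).
move=> h1 h2; have := h1 ltac:(lra); have := h2 ltac:(lra); nra.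
Qed.

Unset Implicit Arguments.
(* Singular values are 0-indexed: sigma_i (paper, 1-based) = s (i-1).
   So sigma*_r = ss (r-1), sigma*_{r+1} = ss r. *)
Theorem lemma6 (R : realType) (n1 n2 r : nat)
  (Mstar E : 'M[R]_(n1, n2))
  (Us : 'M[R]_n1) (ss : nat -> R) (Vs : 'M[R]_(n2, n1))
  (U : 'M[R]_n1) (s : nat -> R) (V : 'M[R]_(n2, n1)) :
  (n1 <= n2)%N -> (0 < r)%N -> (r < n1)%N ->
  is_svd Mstar Us ss Vs ->
  is_svd (Mstar + E) U s V ->
  ss r.-1 - ss r > 2 * specnorm E ->
  specnorm ((lead_proj r U - lead_proj r Us) *m Mstar)
    <= 4 * ss r.-1 * specnorm E / (ss r.-1 - ss r).
Proof.
move=> n12 r0 rn hS hM hgap.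
have n20 : (0 < n2)%N by lia.
have n10 : (0 < n1)%N by lia.
set e := specnorm E in hgap *.
set g := ss r.-1 - ss r in hgap *.
have e0 : 0 <= e by apply: specnorm_ge0.
have hE x : vnorm (E *m x) <= e * vnorm x by apply: specnorm_ub.
have hET y : vnorm (E^T *m y) <= e * vnorm y by apply: specnorm_tr.
have hNE x : vnorm ((- E) *m x) <= e * vnorm x by rewrite mulNmx vnormN.
have hNET y : vnorm ((- E)^T *m y) <= e * vnorm y by rewrite linearN /= mulNmx vnormN.
have w1 : ss r.-1 <= s r.-1 + e.
  apply: (weyl hS hM) => //; last by lia.
  by move=> x; rewrite opprD addrA subrr add0r.
have w2 : s r <= ss r + e.
  apply: (weyl hM hS) => // x; by rewrite addrC addKr.
case: (hS) => hUs hVs ss0 ssm _; case: (hM) => hU hV s0 sm _.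
have ssr0 : 0 <= ss r := ss0 _ rn.
have sr0 : 0 <= s r := s0 _ rn.
have [t1a t1b] := sintheta (F := E) hS hM (esym (addrK _ _)) hE hET r0 rn n20 e0
  ltac:(rewrite /g in hgap; lra).
have [t2a _] := sintheta (F := - E) hM hS (ltac:(by rewrite opprK) : Mstar + E = Mstar - - E) hNE hNET r0 rn n20 e0
  ltac:(rewrite /g in hgap; lra).
set t := 2 * e / g.
have gdef : g = ss r.-1 - ss r by [].
have g0 : 0 < g by lra.
have b1 : e / (ss r.-1 - s r) <= t by apply: ratio_bound => //; lra.
have b2 : e / (s r.-1 - ss r) <= t by apply: ratio_bound => //; lra.
have t0 : 0 <= e / (ss r.-1 - s r) by rewrite divr_ge0 //; lra.
have tlt1 : t <= 1 by rewrite /t ler_pdivrMr //; lra.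
rewrite !lead_projE -/(proj r U) -/(proj r Us).
apply: specnorm_le => // x.
have split : (proj r U - proj r Us) *m Mstar *m x =
    proj r U *m (cproj r Us *m (Mstar *m x)) - cproj r U *m (proj r Us *m (Mstar *m x)).
  have hQ : cproj r U = 1%:M - proj r U by rewrite -(proj_cproj r hU) addrC addKr.
  have hQs : cproj r Us = 1%:M - proj r Us by rewrite -(proj_cproj r hUs) addrC addKr.
  rewrite hQ hQs; move: (proj r U) (proj r Us) => P Ps.
  rewrite !mulmxA -!mulmxBl; congr (_ *m _ *m _).
  by rewrite mulmxBr mulmx1 mulmxBl mul1mx opprB addrA subrK.
rewrite split; apply: le_trans (vnormB _ _) _.
have tb : vnorm (proj r U *m (cproj r Us *m (Mstar *m x))) <= t * (ss r * vnorm x).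
  rewrite -(cprojK r hUs) -mulmxA.
  apply: le_trans (dual_bound _ _ _ _ _) _.
  - exact: projT.
  - exact: projK.
  - exact: cprojT.
  - exact: t2a.
  have t20 : 0 <= e / (s r.-1 - ss r) by rewrite divr_ge0 //; lra.
  apply: ler_pM => //; first exact: vnorm_ge0.
  rewrite mulmxA -(svd_Qcomm r hS) -mulmxA.
  apply: le_trans (svd_tail _ hS rn) _; rewrite ler_wpM2l //.
  exact: vnorm_cproj.
have ta : vnorm (cproj r U *m (proj r Us *m (Mstar *m x))) <=
          (s r * (e / (ss r.-1 - s r)) + e) * vnorm x.
  rewrite (mulmxA (proj r Us)) -(svd_Pcomm r hS) -(mulmxA Mstar).
  have -> : Mstar = (Mstar + E) - E by rewrite addrK.
  rewrite mulmxBl mulmxBr mulmxA -(svd_Qcomm r hM) -mulmxA.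
  apply: le_trans (vnormB _ _) _; rewrite mulrDl.
  apply: lerD.
    apply: le_trans (svd_tail _ hM rn) _; rewrite -mulrA ler_wpM2l //.
  apply: le_trans (vnorm_cproj _ _ hU) _; apply: le_trans (hE _) _.
  by rewrite ler_wpM2l // vnorm_proj.
have hb : 4 * ss r.-1 * e / g = 2 * ss r.-1 * t by rewrite /t; field; lra.
rewrite hb.
have p1 : s r * (e / (ss r.-1 - s r)) <= (ss r + e) * t by apply: ler_pM.
have p2 : e * t <= e by rewrite -[X in _ <= X]mulr1 ler_wpM2l.
have p3 : t * g = 2 * e by rewrite /t; field; lra.
have vx := vnorm_ge0 x.
set X := vnorm x in ta tb vx *.
have : vnorm (proj r U *m (cproj r Us *m (Mstar *m x))) +
       vnorm (cproj r U *m (proj r Us *m (Mstar *m x))) <=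
       (t * ss r + (ss r + e) * t + e) * X.
  apply: le_trans (lerD tb ta) _; rewrite mulrA -mulrDl ler_wpM2r //; lra.
move=> h; apply: le_trans h _; rewrite ler_wpM2r //.
rewrite /g in p3; nra.
Qed.
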